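(* Let $\partial$ be a derivation of $\mathcal{H}_N'$ of degree $\bm 0$, i.e. $\partial(\mathbb{K}h_{\bm r})\subseteq\mathbb{K}h_{\bm r}$ for all $\bm r\in\mathbb{Z}^N$. Then there exist $c_1,\dots,c_N\in\mathbb{K}$ such that, with $h=\sum_{k=1}^N c_kD(e_k,\bm0)\in\mathfrak h$, we have $\partial=\operatorname{ad}(h)$ on $\mathcal{H}_N'$.
   Context: $\mathbb{K}$ is an algebraically closed field of characteristic zero, $N=2m\ge2$ even, $e_1,\dots,e_N$ standard basis, $(\cdot,\cdot)$ the bilinear form on $\mathbb{K}^N$ with $(e_i,e_j)=\delta_{ij}$. Let $A_N=\mathbb{K}[t_1^{\pm1},\dots,t_N^{\pm1}]$, $d_i=t_i\frac{\partial}{\partial t_i}$, $t^{\bm r}=t_1^{r_1}\cdots t_N^{r_N}$, $D(u,\bm r)=\sum_i u_it^{\bm r}d_i$ (so $D(e_k,\bm0)=d_k$). Let $\bm J=\begin{pmatrix} O_m & I_m\\ -I_m & O_m\end{pmatrix}$, $\overline{\bm r}=\bm J\bm r$, $h_{\bm r}=D(\overline{\bm r},\bm r)$, $\mathfrak h=\operatorname{span}_{\mathbb{K}}\{d_1,\dots,d_N\}$. The Hamiltonian Lie algebra $\mathcal{H}_N=\operatorname{span}_{\mathbb{K}}\{h_{\bm r}:\bm r\ne\bm0\}\oplus\mathfrak h$ has commutator bracket with $[h_{\bm r},h_{\bm s}]=(\overline{\bm r},\bm s)h_{\bm r+\bm s}$, $[D(u,\bm0),h_{\bm r}]=(u,\bm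 r)h_{\bm r}$; $\mathcal{H}_N'=\operatorname{span}_{\mathbb{K}}\{h_{\bm r}:\bm r\ne\bm0\}$ is an ideal, and $\operatorname{ad}(h)$ denotes the map $x\mapsto[h,x]$ restricted to $\mathcal{H}_N'$. *)

(* Defs.v *)
From HB Require Import structures.
From mathcomp Require Import all_boot all_order all_algebra.
From mathcomp Require Import finmap monalg.
Set Implicit Arguments. Unset Strict Implicit. Unset Printing Implicit Defensive.
Import Order.TTheory GRing.Theory Num.Theory.
Local Open Scope ring_scope.

Notation ZN m := 'cV[int]_(m + m).

Definition Jmat (m : nat) : 'M[int]_(m + m) :=
  block_mx 0 1%:M (- 1%:M) 0.

Definition rbar (m : nat) (r : ZN m) : ZN m := Jmat m *m r.

Definition bform (m : nat) (u v : ZN m) : int := \sum_(i < m + m) u i 0 * v i 0.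

(* The vector space spanned by the h_r : finitely supported K-valued functions
   on Z^N; the basis vector h_r is <<r>> (coefficient 1 at r). H_N' is the
   subspace of those x with x@_0 = 0 (h_0 = D(0,0) = 0 in the paper). *)
Notation Hsp F m := {malg F[ZN m]}.

Definition inHp (F : fieldType) (m : nat) (x : Hsp F m) : Prop := x@_0 = 0.

Definition hb (F : fieldType) (m : nat) (r : ZN m) : Hsp F m := << r >>.

Definition hbr (F : fieldType) (m : nat) (x y : Hsp F m) : Hsp F m :=
  \sum_(r <- msupp x) \sum_(s <- msupp y)
     (x@_r * y@_s * (bform (rbar r) s)%:~R) *: hb F (r + s).

Definition pair_KZ (F : fieldType) (m : nat) (u : 'I_(m + m) -> F) (r : ZN m) : F :=
  \sum_(i < m + m) u i * (r i 0)%:~R.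

(* ad(D(u,0)) restricted to H_N', the linear extension of
   [D(u,0), h_r] = (u, r) h_r. *)
Definition adD (F : fieldType) (m : nat) (u : 'I_(m + m) -> F) (x : Hsp F m) : Hsp F m :=
  \sum_(r <- msupp x) (x@_r * pair_KZ u r) *: hb F r.

Definition is_derivation (F : fieldType) (m : nat) (D : Hsp F m -> Hsp F m) : Prop :=
  [/\ (forall x, inHp x -> inHp (D x)),
      (forall (a : F) x y, inHp x -> inHp y -> D (a *: x + y) = a *: D x + D y)
    & (forall x y, inHp x -> inHp y -> D (hbr x y) = hbr (D x) y + hbr x (D y))].

Definition degree0 (F : fieldType) (m : nat) (D : Hsp F m -> Hsp F m) : Prop :=
  forall r : ZN m, r != 0 -> exists a : F, D (hb F r) = a *: hb F r.

(* Main.v *)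
Require Import Defs.
From HB Require Import structures.
From mathcomp Require Import all_boot all_order all_algebra.
From mathcomp Require Import finmap monalg.
From mathcomp Require Import zify.
Import GRing.Theory Num.Theory.
Local Open Scope ring_scope.

Definition om {m} (u v : ZN m) : int := bform (rbar u) v.

Lemma bformE m (u v : ZN m) : bform u v = (u^T *m v) 0 0.
Proof. by rewrite /bform mxE; apply: eq_bigr => i _; rewrite mxE. Qed.

Lemma JT m : (Jmat m)^T = - Jmat m.
Proof. by rewrite /Jmat tr_block_mx !trmx0 trmx1 linearN /= trmx1 opp_block_mx !oppr0 opprK. Qed.

Lemma JTJ m : (Jmat m)^T *m Jmat m = 1%:M.
Proof.
rewrite JT /Jmat opp_block_mx mulmx_block !oppr0 !mulmx0 !mul0mx !addr0 !add0r.
by rewrite mulNmx mulmxN opprK !mul1mx opprK scalar_mx_block mulmx1.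
Qed.

Lemma Jinj m (u : ZN m) : Jmat m *m u = 0 -> u = 0.
Proof. by move=> h; rewrite -[u]mul1mx -JTJ -mulmxA h mulmx0. Qed.

Lemma omE m (u v : ZN m) : om u v = ((trmx u *m trmx (Jmat m)) *m v) 0 0.
Proof. by rewrite /om bformE /rbar trmx_mul. Qed.

Lemma om_self m (u : ZN m) : om u u = 0.
Proof.
rewrite omE; set A := _ *m u.
have e : A^T = - A.
  rewrite /A !trmx_mul !trmxK.
  by rewrite JT mulmxN mulNmx opprK mulmxA.
have := congr1 (fun M : 'M[int]_1 => M 0 0) e; rewrite mxE /= => h.
have : A 0 0 = - A 0 0 by rewrite {1}h mxE.
move: (A 0 0 : int) => x; lia.
Qed.

Lemma bformDl m (a b c : ZN m) : bform (a + b) c = bform a c + bform b c.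
Proof. by rewrite /bform -big_split; apply: eq_bigr => i _; rewrite mxE mulrDl. Qed.
Lemma bformDr m (a b c : ZN m) : bform a (b + c) = bform a b + bform a c.
Proof. by rewrite /bform -big_split; apply: eq_bigr => i _; rewrite mxE mulrDr. Qed.
Lemma bformNl m (a c : ZN m) : bform (- a) c = - bform a c.
Proof. by rewrite /bform -sumrN; apply: eq_bigr => i _; rewrite mxE mulNr. Qed.
Lemma bformZr m k (a c : ZN m) : bform a (k *: c) = k * bform a c.
Proof. by rewrite /bform mulr_sumr; apply: eq_bigr => i _; rewrite mxE mulrCA. Qed.

Lemma om_addl m (u v w : ZN m) : om (u + v) w = om u w + om v w.
Proof. by rewrite /om /rbar mulmxDr bformDl. Qed.
Lemma om_addr m (u v w : ZN m) : om u (v + w) = om u v + om u w.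
Proof. by rewrite /om bformDr. Qed.
Lemma om_oppl m (u w : ZN m) : om (- u) w = - om u w.
Proof. by rewrite /om /rbar mulmxN bformNl. Qed.
Lemma om_scaler m k (u w : ZN m) : om u (k *: w) = k * om u w.
Proof. by rewrite /om bformZr. Qed.
Lemma om0l m (w : ZN m) : om 0 w = 0.
Proof. by rewrite /om /rbar mulmx0 /bform big1 // => i _; rewrite mxE mul0r. Qed.
Lemma om0r m (w : ZN m) : om w 0 = 0.
Proof. by rewrite /om /bform big1 // => i _; rewrite !mxE mulr0. Qed.

Lemma om_nondeg m (u : ZN m) : u != 0 -> om u (rbar u) != 0.
Proof.
move=> nu; apply/negP => /eqP h; move/negP: nu; apply; apply/eqP.
apply: Jinj; apply/matrixP => i j; rewrite ord1 [RHS]mxE.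
move: h; rewrite /om /bform => /eqP; rewrite psumr_eq0; last by move=> k _; exact: sqr_ge0.
move=> /allP /(_ i) /=; rewrite mem_index_enum => /(_ isT).
by rewrite mulf_eq0 orbb => /eqP.
Qed.

Lemma pick3 (a1 b1 a2 b2 a3 b3 : int) : (a1 != 0) || (b1 != 0) -> (a2 != 0)||(b2 != 0) -> (a3 != 0)||(b3!=0) -> exists k : int, [/\ a1 + k*b1 != 0, a2 + k*b2 != 0 & a3 + k*b3 != 0].
Proof.
move=> h1 h2 h3.
case: (boolP [&& a1 + 0*b1 != 0, a2 + 0*b2 != 0 & a3 + 0*b3 != 0]) => [/and3P[]|H0]; first by exists 0.
case: (boolP [&& a1 + 1*b1 != 0, a2 + 1*b2 != 0 & a3 + 1*b3 != 0]) => [/and3P[]|H1]; first by exists 1.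
case: (boolP [&& a1 + 2*b1 != 0, a2 + 2*b2 != 0 & a3 + 2*b3 != 0]) => [/and3P[]|H2]; first by exists 2.
case: (boolP [&& a1 + 3*b1 != 0, a2 + 3*b2 != 0 & a3 + 3*b3 != 0]) => [/and3P[]|H3]; first by exists 3.
exfalso. lia.
Qed.

Lemma add_ext m (G : zmodType) (b : ZN m -> G) : b 0 = 0 ->
  (forall r s, om r s != 0 -> b (r+s) = b r + b s) -> forall r s, b (r+s) = b r + b s.
Proof.
move=> b0 H r s.
case: (eqVneq (om r s) 0) => [ors|]; last exact: H.
case: (eqVneq r 0) => [->|nr]; first by rewrite add0r b0 add0r.
case: (eqVneq s 0) => [->|ns]; first by rewrite addr0 b0 addr0.
case: (eqVneq (r+s) 0) => [rs0|nrs].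
  have e : s = - r by rewrite -(addKr r s) rs0 addr0.
  rewrite rs0 b0 e.
  set t := rbar r.
  have h1 := om_nondeg _ _ nr.
  have e1 := H r t h1.
  have e2 := H (- r) (r + t).
  rewrite om_oppl om_addr om_self add0r oppr_eq0 addKr e1 in e2.
  have := e2 h1 => e3.
  have : b (- r) + b r = 0.
    by apply: (addIr (b t)); rewrite add0r -addrA -e3.
  by rewrite addrC => ->.
have h1 := om_nondeg _ _ nr; have h2 := om_nondeg _ _ ns; have h3 := om_nondeg _ _ nrs.
have [k [k1 k2 _]] := pick3 (om r (rbar r)) (om r (rbar s)) (om s (rbar r)) (om s (rbar s))
   (om r (rbar r)) (om r (rbar s))
   (introT orP (or_introl h1)) (introT orP (or_intror h2)) (introT orP (or_introl h1)).
set u := rbar r + k *: rbar s.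
have hu1 : om r u != 0 by rewrite /u om_addr om_scaler.
have hu2 : om s u != 0 by rewrite /u om_addr om_scaler.
have [l [l1 l2 l3]] := pick3 (om r u) (om r (rbar (r + s))) (om s u) (om s (rbar (r + s)))
   (om (r + s) u) (om (r + s) (rbar (r + s)))
   (introT orP (or_introl hu1)) (introT orP (or_introl hu2)) (introT orP (or_intror h3)).
set t := u + l *: rbar (r + s).
have t1 : om r t != 0 by rewrite /t om_addr om_scaler.
have t2 : om s t != 0 by rewrite /t om_addr om_scaler.
have t3 : om (r + s) t != 0 by rewrite /t om_addr om_scaler.
have e1 := H _ _ t3.
have e3 := H _ _ t2.
have e2 : om r (s + t) != 0 by rewrite om_addr ors add0r.
move: (H _ _ e2); rewrite addrA e1 e3 addrA => e.
exact: (addIr (b t)).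
Qed.

Lemma lin_add m (R : pzRingType) (b : ZN m -> R) : (forall r s, b (r+s) = b r + b s) ->
  forall r, b r = \sum_(i < m + m) b (delta_mx i 0) * (r i 0)%:~R.
Proof.
move=> H.
have b0 : b 0 = 0.
  have := H 0 0; rewrite addr0 => /(congr1 (fun x => x - b 0)).
  by rewrite addrK subrr => ->.
have bN v : b (- v) = - b v.
  by apply/esym/addr0_eq; rewrite -H subrr.
have bMn v n : b (v *+ n) = b v *+ n.
  by elim: n => [|n IH]; rewrite ?mulr0n // !mulrS H IH.
have bMz v k : b (v *~ k) = b v *~ k.
  by case: k => n; rewrite /intmul ?bN bMn.
have sc (k : int) (M : ZN m) : k *: M = M *~ k by rewrite -scaler_int intz.
move=> r; rewrite {1}[r]matrix_sum_delta (big_morph b H b0).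
apply: eq_bigr => i _; rewrite big_ord1 sc bMz mulrzr.
by congr (b (delta_mx i _) *~ r i _); apply/val_inj; case: (0 : 'I_1) => [[]].
Qed.

Lemma hbr11 (F : fieldType) m (x y : Hsp F m) (r s : ZN m) :
  (msupp x `<=` [fset r])%fset -> (msupp y `<=` [fset s])%fset ->
  hbr x y = (x@_r * y@_s * (om r s)%:~R) *: hb F (r + s).
Proof.
rewrite !fsubset1 => /orP[] /eqP hx /orP[] /eqP hy; rewrite /hbr hx ?hy.
- by rewrite !big_seq_fset1.
- rewrite big_seq_fset1 big_seq_fset0 (@mcoeff_outdom _ _ y s) ?hy ?inE //.
  by rewrite mulr0 mul0r scale0r.
- rewrite big_seq_fset0 (@mcoeff_outdom _ _ x r) ?hx ?inE //.
  by rewrite !mul0r scale0r.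
- rewrite big_seq_fset0 (@mcoeff_outdom _ _ x r) ?hx ?inE //.
  by rewrite !mul0r scale0r.
Qed.

Lemma supp_sc (F : fieldType) m (a : F) (r : ZN m) :
  (msupp (a *: hb F r) `<=` [fset r])%fset.
Proof. apply: fsubset_trans (msuppZ_le _ _) _; exact: msuppU_le. Qed.

Lemma hbrU (F : fieldType) m (a c : F) (r s : ZN m) :
  hbr (a *: hb F r) (c *: hb F s) = (a * c * (om r s)%:~R) *: hb F (r + s).
Proof.
rewrite (hbr11 _ _ _ _ _ _ (supp_sc _ _ a r) (supp_sc _ _ c s)).
by rewrite !mcoeffZ /hb !mcoeffU !eqxx !mulr1n !mulr1.
Qed.

Lemma mkU (F : fieldType) m (a : F) (k : ZN m) : << a *g k >> = a *: hb F k.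
Proof.
apply/malgP => kk. rewrite [RHS]mcoeffZ. rewrite [LHS]mcoeffU. rewrite /hb. rewrite mcoeffU. exact: esym (mulr_natr _ _).
Qed.

Lemma intr_neq0 (F : fieldType) (charF : [pchar F] =i pred0) (k : int) :
  k != 0 -> (k%:~R : F) != 0.
Proof.
have cP := (iffLR (pcharf0P F) charF).
by case: k => n /=; rewrite /intmul ?oppr_eq0 cP.
Qed.

Lemma hbZ_inj (F : fieldType) m (k : ZN m) (x y : F) : x *: hb F k = y *: hb F k -> x = y.
Proof.
move/(congr1 (mcoeff k)); rewrite [LHS]mcoeffZ [RHS]mcoeffZ /hb.
by rewrite [X in _ * X = _]mcoeffU [X in _ = _ * X]mcoeffU eqxx mulr1n !mulr1.
Qed.

Lemma hb_coef (F : fieldType) m (r : ZN m) : (hb F r)@_r = 1.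
Proof. by rewrite /hb mcoeffU eqxx mulr1n. Qed.

Lemma supp_hb (F : fieldType) m (r : ZN m) : (msupp (hb F r) `<=` [fset r])%fset.
Proof. exact: msuppU_le. Qed.

Lemma hbrHH (F : fieldType) m (r s : ZN m) :
  hbr (hb F r) (hb F s) = (om r s)%:~R *: hb F (r + s).
Proof. by rewrite (hbr11 _ _ _ _ _ _ (supp_hb _ _ r) (supp_hb _ _ s)) !hb_coef !mul1r. Qed.

Lemma hbrZH (F : fieldType) m (a : F) (r s : ZN m) :
  hbr (a *: hb F r) (hb F s) = (a * (om r s)%:~R) *: hb F (r + s).
Proof.
rewrite (hbr11 _ _ _ _ _ _ (supp_sc _ _ a r) (supp_hb _ _ s)) [X in X * _ * _]mcoeffZ.
by rewrite !hb_coef !mulr1.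
Qed.

Lemma hbrHZ (F : fieldType) m (c : F) (r s : ZN m) :
  hbr (hb F r) (c *: hb F s) = (c * (om r s)%:~R) *: hb F (r + s).
Proof.
rewrite (hbr11 _ _ _ _ _ _ (supp_hb _ _ r) (supp_sc _ _ c s)) [X in _ * X * _]mcoeffZ.
by rewrite !hb_coef !mulr1 mul1r.
Qed.

Lemma main_lemma (F : fieldType) (m : nat)
  (charF : [pchar F] =i pred0)
  (D : Hsp F m -> Hsp F m) :
  is_derivation D -> degree0 D ->
  exists c : 'I_(m + m) -> F,
    forall x : Hsp F m, inHp x -> D x = adD c x.
Proof.
move=> [Dh Dlin Dlie] deg.
have H0 : inHp (0 : Hsp F m) by rewrite /inHp mcoeff0.
have D0 : D 0 = 0.
  have := Dlin 1 0 0 H0 H0; rewrite scale1r addr0 => /(congr1 (fun z => z - D 0)).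
  by rewrite addrK subrr scale1r => <-.
have DZ x a : inHp x -> D (a *: x) = a *: D x.
  move=> hx; rewrite -[a *: x]addr0 (Dlin _ _ _ hx H0) D0 addr0; reflexivity.
have hbH (r : ZN m) : r != 0 -> inHp (hb F r).
  by move=> nr; rewrite /inHp /hb mcoeffU (negbTE nr) mulr0n.
pose b (r : ZN m) := if r == 0 then 0 else (D (hb F r))@_r.
have Dhb (r : ZN m) : r != 0 -> D (hb F r) = b r *: hb F r.
  move=> nr; rewrite /b (negbTE nr); have [a ->] := deg r nr.
  congr (_ *: _); rewrite [RHS]mcoeffZ /hb [X in _ * X]mcoeffU eqxx mulr1n mulr1 //.
have bom (r s : ZN m) : om r s != 0 -> b (r + s) = b r + b s.
  move=> h.
  have nr : r != 0 by apply: contraNneq h => ->; rewrite om0l.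
  have ns : s != 0 by apply: contraNneq h => ->; rewrite om0r.
  have nrs : r + s != 0.
    have e0 : om r s = om r (r + s) by rewrite om_addr om_self add0r.
    by apply/negP => /eqP e; move: h; rewrite e0 e om0r eqxx.
  have := Dlie (hb F r) (hb F s) (hbH _ nr) (hbH _ ns).
  rewrite (Dhb _ nr) (Dhb _ ns).
  rewrite hbrHH hbrZH hbrHZ (DZ _ _ (hbH _ nrs)) (Dhb _ nrs) scalerA -scalerDl => /hbZ_inj.
  have hom := intr_neq0 _ charF _ h.
  rewrite -mulrDl mulrC => /(mulIf hom) //.
have b0 : b 0 = 0 by rewrite /b eqxx.
have badd := add_ext _ _ _ b0 bom.
have blin := lin_add _ _ _ badd.
exists (fun i => b (delta_mx i 0)) => x hx.
have Dsum : forall (l : seq (ZN m)) (f : ZN m -> F), (forall k, k \in l -> k != 0) ->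
   inHp (\sum_(k <- l) f k *: hb F k) /\ D (\sum_(k <- l) f k *: hb F k) = \sum_(k <- l) f k *: D (hb F k).
  elim => [|a l IH] f hl; first split.
    rewrite big_nil. exact: H0.
    rewrite [X in D X]big_nil. apply: (etrans D0). symmetry. apply: big_nil.
  have [IH1 IH2] := IH f (fun k kl => hl k (introT orP (or_intror kl))).
  have na := hl a (mem_head a l).
  split.
    rewrite big_cons /inHp mcoeffD [X in X + _]mcoeffZ.
    have := hbH _ na; rewrite /inHp => ->.
    by move: IH1; rewrite /inHp => ->; rewrite mulr0 addr0.
  rewrite [RHS]big_cons big_cons (Dlin _ _ _ (hbH _ na) IH1) IH2; reflexivity.
have hl : forall k, k \in msupp x -> k != 0.
  by move=> k kin; apply: contraTneq kin => ->; rewrite -mcoeff_neq0 hx eqxx.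
rewrite {1}[x]monalgE.
rewrite (eq_bigr (fun k => x@_k *: hb F k)); last by move=> k _; exact: mkU.
rewrite (proj2 (Dsum _ _ hl)) /adD.
apply: eq_big_seq => k kin.
rewrite (Dhb _ (hl _ kin)) scalerA (blin k); reflexivity.
Qed.

Theorem lemma4p4 (F : closedFieldType) (m : nat)
  (charF : [pchar F] =i pred0) (hm : (0 < m)%N)
  (D : Hsp F m -> Hsp F m) :
  is_derivation D -> degree0 D ->
  exists c : 'I_(m + m) -> F,
    forall x : Hsp F m, inHp x -> D x = adD c x.
Proof. exact: main_lemma. Qed.
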